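(* For integers $n\geq 3$ and $m\geq 1$, $$\chi_\rho(FSSD_m(S'(C_n))) = \begin{cases} 3, & n \text{ even},\\ 5, & n\text{ odd}.\end{cases}$$
   Context: All graphs are finite and simple. For a positive integer $i$, an $i$-packing in a graph is a set of vertices any two distinct members of which are at distance greater than $i$. The packing chromatic number $\chi_\rho(H)$ is the smallest $k$ such that $V(H)$ can be partitioned into sets $V_1,\dots,V_k$ with each $V_i$ an $i$-packing. For a positive integer $m$, $FSSD_m(G)$ is obtained from $G$ by replacing each edge $xy$ by a copy of $K_{2,m}$: the edge $xy$ is deleted and $m$ new vertices are added, each adjacent to exactly $x$ and $y$. The splitting graph $S'(G)$ of a graph $G$ with vertices $w_1,\dots,w_n$ is obtained from $G$ by adding new vertices $w_1',\dots,w_n'$, where each $w_i'$ is joined to every neighbor of $w_i$ in $G$ (equivalently, the neighborhood corona $G\star K_1$). $C_n$ is the cycle on $n$ vertices. *)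

(* Defs.v *)
From mathcomp Require Import all_boot.
Set Implicit Arguments. Unset Strict Implicit. Unset Printing Implicit Defensive.

Record graph := Graph { vert : finType; adj : rel vert }.

Fixpoint dist_le (G : graph) (k : nat) (x y : vert G) : bool :=
  match k with
  | 0 => x == y
  | k'.+1 => @dist_le G k' x y || [exists z, @adj G x z && @dist_le G k' z y]
  end.

Definition packing (G : graph) (i : nat) (A : {set vert G}) : Prop :=
  forall x y, x \in A -> y \in A -> x != y -> ~~ @dist_le G i x y.

(* V(G) can be partitioned into V_1,...,V_k with V_i an i-packing.
   Classes are indexed 0..k-1, class c corresponding to V_(c+1). *)
Definition packing_colorable (G : graph) (k : nat) : Prop :=
  exists V : 'I_k -> {set vert G},
    (forall x : vert G, exists! c : 'I_k, x \in V c) /\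
    (forall c : 'I_k, @packing G c.+1 (V c)).

Definition packing_chromatic_number_is (G : graph) (k : nat) : Prop :=
  @packing_colorable G k /\ forall j, @packing_colorable G j -> k <= j.

(* The cycle C_n on vertices 0..n-1 (simple for n >= 3). *)
Definition cycle_graph (n : nat) : graph :=
  @Graph 'I_n (fun i j : 'I_n =>
    (val j == (val i).+1 %% n) || (val i == (val j).+1 %% n)).

(* Splitting graph S'(G): inl w = original w, inr w = the new vertex w';
   w' is joined to every neighbour of w in G. *)
Definition splitting_adj (G : graph) (u v : vert G + vert G) : bool :=
  match u, v with
  | inl x, inl y => @adj G x y
  | inl x, inr y => @adj G y x
  | inr x, inl y => @adj G x y
  | inr _, inr _ => false
  end.

Definition splitting_graph (G : graph) : graph :=
  @Graph (vert G + vert G)%type (@splitting_adj G).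

(* FSSD_m(G): each edge xy (an unordered pair {x,y}) is replaced by m new
   vertices (the pair {x,y} together with an index in 'I_m), each adjacent
   exactly to x and y; the edge xy itself is deleted. *)
Definition fssd_valid (G : graph) (m : nat)
    (u : vert G + ({set vert G} * 'I_m)) : bool :=
  match u with
  | inl _ => true
  | inr (s, _) => [exists x, exists y, @adj G x y && (s == [set x; y])]
  end.

Definition fssd_vert (G : graph) (m : nat) : finType :=
  {u : (vert G + ({set vert G} * 'I_m))%type | @fssd_valid G m u}.

Definition fssd_adj0 (G : graph) (m : nat)
    (u v : vert G + ({set vert G} * 'I_m)) : bool :=
  match u, v with
  | inl x, inr (s, _) => x \in s
  | inr (s, _), inl x => x \in s
  | _, _ => false
  end.

Definition FSSD (m : nat) (G : graph) : graph :=
  @Graph (fssd_vert G m) (fun u v => @fssd_adj0 G m (val u) (val v)).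

(* Main.v *)
Require Import Defs.
From mathcomp Require Import all_boot.
From mathcomp Require Import zify.
Set Implicit Arguments. Unset Strict Implicit. Unset Printing Implicit Defensive.


Section Gen.
Variable G : graph.
Lemma dl_refl k (x : vert G) : dist_le k x x.
Proof. by case: k => [|k] /=; [rewrite eqxx | elim: k => [|k IH] /=; rewrite ?eqxx ?IH]. Qed.
Lemma dl_S k (x y : vert G) : dist_le k x y -> dist_le k.+1 x y.
Proof. by move=> h /=; rewrite h. Qed.
Lemma dl_mono k k' (x y : vert G) : k <= k' -> dist_le k x y -> dist_le k' x y.
Proof.
move=> /subnK <-; elim: (k' - k) => [|d IH] h //.
by rewrite addSn; apply: dl_S; exact: IH.
Qed.
Lemma dl_step k (x z y : vert G) : adj x z -> dist_le k z y -> dist_le k.+1 x y.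
Proof. move=> h1 h2 /=; apply/orP; right; apply/existsP; exists z; by rewrite h1 h2. Qed.
Lemma dl_inv k (x y : vert G) : dist_le k.+1 x y ->
  dist_le k x y \/ exists z, adj x z /\ dist_le k z y.
Proof. move=> /= /orP [h|/existsP [z /andP [h1 h2]]]; [by left| by right; exists z]. Qed.
Lemma dl0 (x y : vert G) : dist_le 0 x y -> x = y.
Proof. by move=> /eqP. Qed.
End Gen.


Section Col.
Variables (G : graph) (j : nat) (V : 'I_j -> {set vert G}).
Hypothesis hV : forall x : vert G, exists! c : 'I_j, x \in V c.
Hypothesis hP : forall c : 'I_j, packing c.+1 (V c).
Definition col (x : vert G) : nat := if [pick c | x \in V c] is Some c then val c else 0.
Lemma colP x : exists c : 'I_j, val c = col x /\ x \in V c.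
Proof.
rewrite /col; case: pickP => [c hc|h]; first by exists c.
by case: (hV x) => c [hc _]; move: (h c); rewrite hc.
Qed.
Lemma col_lt x : col x < j.
Proof. case: (colP x) => c [<- _]; exact: ltn_ord. Qed.
Lemma sep x y k : x != y -> dist_le k x y -> k <= (col x).+1 -> col x != col y.
Proof.
move=> hxy hd hk; apply/negP => /eqP e.
case: (colP x) => c [ec hc]; case: (colP y) => c' [ec' hc'].
have cc : c = c' by apply: val_inj; rewrite ec ec'.
subst c'.
move: (hP hc hc' hxy); rewrite (dl_mono _ hd) //; by rewrite ec.
Qed.
End Col.


Section Spec.
Variables (n m : nat) (hn : 3 <= n) (hm : 1 <= m).
Local Notation C := (cycle_graph n).
Local Notation Gs := (splitting_graph (cycle_graph n)).
Local Notation F := (FSSD m Gs).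

Definition Ov (x : 'I_n + 'I_n) : vert F := @exist _ (@fssd_valid Gs m) (inl x) isT.
Definition k0 : 'I_m := Ordinal hm.
Lemma validS (a b : 'I_n + 'I_n) (h : @splitting_adj C a b) :
  @fssd_valid Gs m (inr ([set a; b], k0)).
Proof. apply/existsP; exists a; apply/existsP; exists b; apply/andP; split => //. Qed.
Definition Sv a b (h : @splitting_adj C a b) : vert F :=
  @exist _ (@fssd_valid Gs m) (inr ([set a; b], k0)) (validS h).

Lemma n0 : 0 < n. Proof. lia. Qed.
Definition nx (i : 'I_n) : 'I_n := Ordinal (ltn_pmod i.+1 n0).
Lemma nxv i : val (nx i) = if i.+1 < n then i.+1 else 0.
Proof.
rewrite /=; case: ifP => h; first by rewrite modn_small.
have -> : i.+1 = n by move: (ltn_ord i) h; lia.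
by rewrite modnn.
Qed.
Lemma nx_neq i : i != nx i.
Proof. apply/eqP => /(congr1 (@nat_of_ord n)); rewrite nxv; move: (ltn_ord i); case: (ltnP i.+1 n); lia. Qed.
Lemma nx_neq2 i : i != nx (nx i).
Proof. apply/eqP => /(congr1 (@nat_of_ord n)); rewrite !nxv; move: (ltn_ord i);
  case: (ltnP i.+1 n) => ?; rewrite ?nxv /=; try case: (ltnP i.+2 n); try case: (ltnP 1 n); lia. Qed.
Lemma nx_surj c : exists i, nx i = c.
Proof.
case: (posnP c) => hc.
- have hi : n.-1 < n by lia.
  exists (Ordinal hi); apply: val_inj; rewrite nxv /=; case: (ltnP n.-1.+1 n); lia.
- have hi : c.-1 < n by move: (ltn_ord c); lia.
  exists (Ordinal hi); apply: val_inj; rewrite nxv /=; move: (ltn_ord c); case: (ltnP c.-1.+1 n); lia.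
Qed.
Lemma cyc1 i : @adj C i (nx i). Proof. by rewrite /= eqxx. Qed.
Lemma cyc2 i : @adj C (nx i) i. Proof. by rewrite /= eqxx orbT. Qed.

Lemma adjOS1 a b h : @adj F (Ov a) (@Sv a b h). Proof. by rewrite /= !inE eqxx. Qed.
Lemma adjOS2 a b h : @adj F (Ov b) (@Sv a b h). Proof. by rewrite /= !inE eqxx orbT. Qed.
Lemma adjSO1 a b h : @adj F (@Sv a b h) (Ov a). Proof. by rewrite /= !inE eqxx. Qed.
Lemma adjSO2 a b h : @adj F (@Sv a b h) (Ov b). Proof. by rewrite /= !inE eqxx orbT. Qed.

Lemma neqOS x a b h : Ov x != @Sv a b h. Proof. by []. Qed.
Lemma neqSO x a b h : @Sv a b h != Ov x. Proof. by []. Qed.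
Lemma eqOO x y : (Ov x == Ov y) = (x == y).
Proof. by apply/eqP/eqP => [/(congr1 val) [] | ->]. Qed.
Lemma neqSS a b h a' b' h' z : (z \in [set a; b]) != (z \in [set a'; b']) ->
  @Sv a b h != @Sv a' b' h'.
Proof. by move=> hz; apply/eqP => /(congr1 val) [] e; move: hz; rewrite e eqxx. Qed.

Lemma inl_eq (a b : 'I_n) : (inl a == inl b :> 'I_n + 'I_n) = (a == b).
Proof. by apply/eqP/eqP => [[]|->]. Qed.
Lemma inr_eq (a b : 'I_n) : (inr a == inr b :> 'I_n + 'I_n) = (a == b).
Proof. by apply/eqP/eqP => [[]|->]. Qed.
Lemma inlr (a b : 'I_n) : (inl a == inr b :> 'I_n + 'I_n) = false. Proof. by []. Qed.
Lemma inrl (a b : 'I_n) : (inr a == inl b :> 'I_n + 'I_n) = false. Proof. by []. Qed.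

Lemma d1 (x y : vert F) : adj x y -> dist_le 1 x y.
Proof. move=> h; apply: dl_step h (dl_refl _ _). Qed.
Lemma d2 (x z y : vert F) : adj x z -> adj z y -> dist_le 2 x y.
Proof. move=> h h'; apply: dl_step h (d1 h'). Qed.
Lemma d3 (x z z' y : vert F) : adj x z -> adj z z' -> adj z' y -> dist_le 3 x y.
Proof. move=> h h' h''; apply: dl_step h (d2 h' h''). Qed.
Lemma d4 (x z z' z'' y : vert F) : adj x z -> adj z z' -> adj z' z'' -> adj z'' y -> dist_le 4 x y.
Proof. move=> h h' h'' h'''; apply: dl_step h (d3 h' h'' h'''). Qed.

Section Lower.
Variables (j : nat) (hj : j <= 4) (V : 'I_j -> {set vert F}).
Hypothesis hV : forall x : vert F, exists! c : 'I_j, x \in V c.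
Hypothesis hP : forall c : 'I_j, packing c.+1 (V c).
Local Notation cl := (col V).
Lemma lt4 x : cl x < 4. Proof. move: (col_lt hV x); lia. Qed.
Let sp := sep hV hP.

Lemma colA i : cl (Ov (inl (nx i))) != 0.
Proof.
set c := nx i; set c' := nx c.
pose N1 := @Sv (inl i) (inl c) (cyc1 i).
pose N2 := @Sv (inr i) (inl c) (cyc1 i).
pose N3 := @Sv (inl c) (inl c') (cyc1 c).
pose N4 := @Sv (inl c) (inr c') (cyc2 c).
have e1 := nx_neq i; have e2 := nx_neq c; have e3 := nx_neq2 i.
apply/eqP => h0.
have z1 : cl N1 != 0 by rewrite -h0; apply: sp (neqSO _ _) (d1 (adjSO2 _)) _.
have z2 : cl N2 != 0 by rewrite -h0; apply: sp (neqSO _ _) (d1 (adjSO2 _)) _.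
have z3 : cl N3 != 0 by rewrite -h0; apply: sp (neqSO _ _) (d1 (adjSO1 _)) _.
have z4 : cl N4 != 0 by rewrite -h0; apply: sp (neqSO _ _) (d1 (adjSO1 _)) _.
have p12 : cl N1 != cl N2.
  apply: sp (d2 (adjSO2 _) (adjOS2 _)) _; last by rewrite ltnS lt0n.
  apply: (@neqSS _ _ _ _ _ _ (inr i)); rewrite !inE ?inl_eq ?inr_eq ?inlr ?inrl ?eqxx ?(negbTE e1) ?(negbTE e2) ?(negbTE e3) //.
have p13 : cl N1 != cl N3.
  apply: sp (d2 (adjSO2 _) (adjOS1 _)) _; last by rewrite ltnS lt0n.
  apply: (@neqSS _ _ _ _ _ _ (inl i)); rewrite !inE ?inl_eq ?inr_eq ?inlr ?inrl ?eqxx ?(negbTE e1) ?(negbTE e2) ?(negbTE e3) //.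
have p14 : cl N1 != cl N4.
  apply: sp (d2 (adjSO2 _) (adjOS1 _)) _; last by rewrite ltnS lt0n.
  apply: (@neqSS _ _ _ _ _ _ (inl i)); rewrite !inE ?inl_eq ?inr_eq ?inlr ?inrl ?eqxx ?(negbTE e1) ?(negbTE e2) ?(negbTE e3) //.
have p23 : cl N2 != cl N3.
  apply: sp (d2 (adjSO2 _) (adjOS1 _)) _; last by rewrite ltnS lt0n.
  apply: (@neqSS _ _ _ _ _ _ (inr i)); rewrite !inE ?inl_eq ?inr_eq ?inlr ?inrl ?eqxx ?(negbTE e1) ?(negbTE e2) ?(negbTE e3) //.
have p24 : cl N2 != cl N4.
  apply: sp (d2 (adjSO2 _) (adjOS1 _)) _; last by rewrite ltnS lt0n.
  apply: (@neqSS _ _ _ _ _ _ (inr i)); rewrite !inE ?inl_eq ?inr_eq ?inlr ?inrl ?eqxx ?(negbTE e1) ?(negbTE e2) ?(negbTE e3) //.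
have p34 : cl N3 != cl N4.
  apply: sp (d2 (adjSO1 _) (adjOS1 _)) _; last by rewrite ltnS lt0n.
  apply: (@neqSS _ _ _ _ _ _ (inl c')); rewrite !inE ?inl_eq ?inr_eq ?inlr ?inrl ?eqxx ?(negbTE e1) ?(negbTE e2) ?(negbTE e3) //. have e2' : (c' == c) = false by rewrite eq_sym; exact: negbTE e2. by rewrite e2'.
move: (lt4 N1) (lt4 N2) (lt4 N3) (lt4 N4) (elimN eqP z1) (elimN eqP z2) (elimN eqP z3) (elimN eqP z4) (elimN eqP p12) (elimN eqP p13) (elimN eqP p14) (elimN eqP p23) (elimN eqP p24) (elimN eqP p34); lia.
Qed.

Lemma colA' c : cl (Ov (inl c)) != 0.
Proof. by case: (nx_surj c) => i <-; apply: colA. Qed.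

Lemma colB i : cl (Ov (inl i)) != cl (Ov (inl (nx i))).
Proof.
apply: sp (d2 (@adjOS1 (inl i) (inl (nx i)) (cyc1 i)) (adjSO2 _)) _.
- by rewrite eqOO inl_eq nx_neq.
- by rewrite ltnS lt0n colA'.
Qed.

Lemma colL i : cl (Ov (inl (nx i))) = 3 -> cl (Ov (inl i)) = cl (Ov (inl (nx (nx i)))).
Proof.
set c := nx i; set c' := nx c => h3.
pose Ps := @Sv (inl i) (inr c) (cyc2 i).
pose Qs := @Sv (inr c) (inl c') (cyc1 c).
pose N3 := @Sv (inl c) (inl c') (cyc1 c).
pose N1 := @Sv (inl i) (inl c) (cyc1 i).
have a1 := colA' i; have a2 := colA' c'.
have b1 := colB i; have b2 := colB c.
have l1 := lt4 (Ov (inl i)); have l2 := lt4 (Ov (inl c')).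
have e1 := nx_neq i; have e2 := nx_neq c.
have x1 : 1 <= cl (Ov (inl i)) by rewrite lt0n.
have x2 : 1 <= cl (Ov (inl c')) by rewrite lt0n.
have y1 : cl (Ov (inl i)) <> 3 by move=> e; move: b1; rewrite e -/c h3.
have y2 : cl (Ov (inl c')) <> 3 by move=> e; move: b2; rewrite e -/c h3.
case: (eqVneq (cl (Ov (inl i))) (cl (Ov (inl c')))) => // hne; exfalso.
move/eqP: hne => hne.
have g1 : cl (Ov (inl c)) != cl (Ov (inr c)).
  apply: sp (d4 (@adjOS1 (inl c) (inl c') (cyc1 c)) (@adjSO2 (inl c) (inl c') (cyc1 c)) (@adjOS2 (inr c) (inl c') (cyc1 c)) (@adjSO1 (inr c) (inl c') (cyc1 c))) _; by rewrite ?eqOO ?h3.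
have g2 : cl (Ov (inl i)) != cl (Ov (inr c)).
  apply: sp (d2 (@adjOS1 (inl i) (inr c) (cyc2 i)) (@adjSO2 (inl i) (inr c) (cyc2 i))) _; by rewrite ?eqOO // ltnS.
have g3 : cl (Ov (inl c')) != cl (Ov (inr c)).
  apply: sp (d2 (@adjOS2 (inr c) (inl c') (cyc1 c)) (@adjSO1 (inr c) (inl c') (cyc1 c))) _; by rewrite ?eqOO // ltnS.
have w0 : cl (Ov (inr c)) = 0.
  move: (lt4 (Ov (inr c))) (elimN eqP g1) (elimN eqP g2) (elimN eqP g3); rewrite h3; lia.
have [hi|hi] : cl (Ov (inl i)) = 1 \/ cl (Ov (inl i)) = 2 by lia.
- have s0 : cl (Ov (inr c)) != cl Ps by apply: sp (d1 (@adjOS2 (inl i) (inr c) (cyc2 i))) _.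
  have s1 : cl (Ov (inl i)) != cl Ps by apply: sp (d1 (@adjOS1 (inl i) (inr c) (cyc2 i))) _.
  have s3 : cl (Ov (inl c)) != cl Ps.
    by apply: sp (d3 (@adjOS2 (inl i) (inl c) (cyc1 i)) (@adjSO1 (inl i) (inl c) (cyc1 i)) (@adjOS1 (inl i) (inr c) (cyc2 i))) _; rewrite ?h3.
  have s2 : cl (Ov (inl c')) != cl Ps.
    apply: sp (d3 (@adjOS2 (inr c) (inl c') (cyc1 c)) (@adjSO1 (inr c) (inl c') (cyc1 c)) (@adjOS2 (inl i) (inr c) (cyc2 i))) _ => //; lia.
  move: (lt4 Ps) (elimN eqP s0) (elimN eqP s1) (elimN eqP s2) (elimN eqP s3); rewrite h3 w0; lia.
- have s0 : cl (Ov (inr c)) != cl Qs by apply: sp (d1 (@adjOS1 (inr c) (inl c') (cyc1 c))) _.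
  have s1 : cl (Ov (inl c')) != cl Qs by apply: sp (d1 (@adjOS2 (inr c) (inl c') (cyc1 c))) _.
  have s3 : cl (Ov (inl c)) != cl Qs.
    by apply: sp (d3 (@adjOS1 (inl c) (inl c') (cyc1 c)) (@adjSO2 (inl c) (inl c') (cyc1 c)) (@adjOS2 (inr c) (inl c') (cyc1 c))) _; rewrite ?h3.
  have s2 : cl (Ov (inl i)) != cl Qs.
    apply: sp (d3 (@adjOS1 (inl i) (inr c) (cyc2 i)) (@adjSO2 (inl i) (inr c) (cyc2 i)) (@adjOS1 (inr c) (inl c') (cyc1 c))) _ => //; lia.
  move: (lt4 Qs) (elimN eqP s0) (elimN eqP s1) (elimN eqP s2) (elimN eqP s3); rewrite h3 w0; lia.
Qed.

Lemma key (a b d : nat) : a < 4 -> b < 4 -> d < 4 -> a != 0 -> b != 0 -> d != 0 ->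
  a != b -> b != d -> (b == 3) ==> (a == d) ->
  (if b == 3 then d == 2 else b == 1) = ~~ (if a == 3 then b == 2 else a == 1).
Proof. by case: a => [|[|[|[|a]]]] //; case: b => [|[|[|[|b]]]] //; case: d => [|[|[|[|d]]]]. Qed.

Definition fb i := if cl (Ov (inl i)) == 3 then cl (Ov (inl (nx i))) == 2 else cl (Ov (inl i)) == 1.
Lemma fbS i : fb (nx i) = ~~ fb i.
Proof.
rewrite /fb; apply: key; rewrite ?lt4 ?colA' ?colB //.
by apply/implyP => /eqP /colL ->.
Qed.

Definition i0 : 'I_n := Ordinal n0.
Lemma iter_nx k : val (iter k nx i0) = k %% n.
Proof.
elim: k => [|k IH]; first by rewrite mod0n.
by rewrite iterS /= IH -addn1 modnDml addn1.
Qed.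
Lemma fb_iter k : fb (iter k nx i0) = fb i0 (+) odd k.
Proof. elim: k => [|k IH]; first by rewrite addbF. by rewrite iterS fbS IH /= addbN. Qed.

Lemma lower_odd : odd n -> False.
Proof.
move=> hodd.
have e : iter n nx i0 = i0 by apply: val_inj; rewrite iter_nx modnn.
by move: (fb_iter n); rewrite e hodd addbT; case: (fb i0).
Qed.

Lemma lower_even : j <= 2 -> False.
Proof.
move=> h2; move: (colB i0) (colA' i0) (colA' (nx i0)) (col_lt hV (Ov (inl i0))) (col_lt hV (Ov (inl (nx i0)))).
case: (cl (Ov (inl i0))) => [|[|a]] //; case: (cl (Ov (inl (nx i0)))) => [|[|b]] //; lia.
Qed.
End Lower.

Lemma dl1 (x y : vert F) : dist_le 1 x y -> x = y \/ adj x y.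
Proof. by case/dl_inv => [/dl0|[z [h /dl0 <-]]]; [left|right]. Qed.
Lemma dl2 (x y : vert F) : dist_le 2 x y -> x = y \/ adj x y \/ exists z, adj x z /\ adj z y.
Proof.
case/dl_inv => [/dl1 [|]|[z [h /dl1 [<-|h']]]]; try tauto.
right; right; by exists z.
Qed.
Lemma dl3 (x y : vert F) : dist_le 3 x y -> x = y \/ adj x y \/ (exists z, adj x z /\ adj z y)
  \/ exists z z', [/\ adj x z, adj z z' & adj z' y].
Proof.
case/dl_inv => [/dl2|[z [h /dl2 [<-|[h'|[z' [h1 h2]]]]]]]; try tauto.
- right; right; left; by exists z.
- right; right; right; by exists z, z'.
Qed.

Definition isO (u : vert F) : bool := if val u is inl _ then true else false.
Lemma adj_bip (u v : vert F) : adj u v -> isO u = ~~ isO v.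
Proof. by case: u => [[a|[s k]] pu]; case: v => [[b|[t l]] pv]. Qed.
Lemma isO_O x : isO (Ov x). Proof. by []. Qed.

Lemma walk3 (a b : 'I_n + 'I_n) : a != b -> dist_le 3 (Ov a) (Ov b) ->
  @splitting_adj C a b || @splitting_adj C b a.
Proof.
move=> hab /dl3 [/eqP|[/adj_bip|[[z [h1 h2]]|[z [z' [h1 h2 h3]]]]]].
- by rewrite eqOO (negbTE hab).
- by [].
- case: z h1 h2 => [[c|[s k]] pz] //= h1 h2.
  case/existsP: pz => x0 /existsP [y0 /andP [hxy /eqP es]].
  move: hab h1 h2; rewrite es !inE => hab /orP [] /eqP ea /orP [] /eqP eb; subst a b.
  all: try by rewrite eqxx in hab.
  all: try (apply/orP; left; exact: hxy). all: try (apply/orP; right; exact: hxy).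
- move: (adj_bip h1) (adj_bip h2) (adj_bip h3); rewrite !isO_O.
  by case: (isO z); case: (isO z').
Qed.

Definition idx (x : 'I_n + 'I_n) : 'I_n := match x with inl i => i | inr i => i end.
Lemma sadj_idx a b : @splitting_adj C a b -> @adj C (idx a) (idx b).
Proof. by case: a => a; case: b => b //= ; rewrite orbC. Qed.
Lemma csym i i' : @adj C i i' = @adj C i' i. Proof. by rewrite /= orbC. Qed.

Lemma succ_cases (i j : nat) : i < n -> j = i.+1 %% n -> j = i.+1 \/ (i = n.-1 /\ j = 0).
Proof.
move=> hi ->; case: (ltnP i.+1 n) => h; first by left; rewrite modn_small.
right; have e : i.+1 = n by lia.
by rewrite e modnn; split => //; lia.
Qed.

Definition colO (a : 'I_n + 'I_n) : nat :=
  if odd n && (val (idx a) == n.-1) then (if a is inl _ then 3 else 4) else (odd (idx a)).+1.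

Lemma colO_hi a b : odd n -> val (idx a) = n.-1 -> val (idx b) = n.-1 -> colO a = colO b -> a = b.
Proof.
move=> hn2; rewrite /colO hn2 /=.
case: a => a; case: b => b /= hA hB; rewrite hA hB eqxx //= => _.
all: by congr (_ _); apply: val_inj; rewrite /= hA hB.
Qed.

Lemma colO_far a b : a != b -> colO a = colO b -> colO a <= 2 /\ ~~ @adj C (idx a) (idx b).
Proof.
move=> hab; rewrite /colO.
have nn : n = n.-1.+1 by rewrite prednK // n0.
case hn2: (odd n) => /=.
- case hA: (val (idx a) == n.-1); case hB: (val (idx b) == n.-1) => //=.
  + move=> e; exfalso; move: hab; rewrite (colO_hi hn2 (eqP hA) (eqP hB)) ?eqxx //.
    by rewrite /colO hn2 hA hB.
  + by move=> e; exfalso; move: e; case: (odd (idx b)); case: (a).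
  + by move=> e; exfalso; move: e; case: (odd (idx a)); case: (b).
  + move=> [] e; split; first by case: (odd (idx a)).
    apply/negP => /orP [] /eqP /succ_cases.
    * case; first exact: ltn_ord.
      - by move=> /(congr1 odd) /= e'; move: e e'; case: (odd (idx a)); case: (odd (idx b)).
      - by move=> [e' _]; move/negbT/eqP: hA => hA; exact: hA e'.
    * case; first exact: ltn_ord.
      - by move=> /(congr1 odd) /= e'; move: e e'; case: (odd (idx a)); case: (odd (idx b)).
      - by move=> [e' _]; move/negbT/eqP: hB => hB; exact: hB e'.
- move=> [] e; split; first by case: (odd (idx a)).
  have on : odd n.-1 by move: hn2; rewrite {1}nn /=; case: (odd n.-1).
  apply/negP => /orP [] /eqP /succ_cases.
  + case; first exact: ltn_ord.
    * by move=> /(congr1 odd) /= e'; move: e e'; case: (odd (idx a)); case: (odd (idx b)).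
    * move=> [/(congr1 odd) e1 /(congr1 odd) e2]; move: e e1 e2 on => /=.
      case: (odd (idx a)); case: (odd (idx b)); case: (odd n.-1) => //= *; discriminate.
  + case; first exact: ltn_ord.
    * by move=> /(congr1 odd) /= e'; move: e e'; case: (odd (idx a)); case: (odd (idx b)).
    * move=> [/(congr1 odd) e1 /(congr1 odd) e2]; move: e e1 e2 on => /=.
      case: (odd (idx a)); case: (odd (idx b)); case: (odd n.-1) => //= *; discriminate.
Qed.
End Spec.


Section Upper.
Variables (n m : nat) (hn : 3 <= n) (hm : 1 <= m).
Local Notation C := (cycle_graph n).
Local Notation Gs := (splitting_graph (cycle_graph n)).
Local Notation F := (FSSD m Gs).

Definition color (u : vert F) : nat := match val u with inl a => @colO n a | inr _ => 0 end.
Definition K := if odd n then 5 else 3.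
Lemma colO_lt (a : 'I_n + 'I_n) : colO a < K.
Proof. rewrite /colO /K; case: (odd n) => /=; try case: ifP; try case: a; move=> *; case: (odd _). all: by []. Qed.
Lemma colO_pos (a : 'I_n + 'I_n) : 0 < colO a.
Proof. rewrite /colO; case: ifP => _ //; by case: a. Qed.
Lemma color_lt u : color u < K.
Proof. rewrite /color; case: (val u) => [a|p]; [exact: colO_lt| by rewrite /K; case: (odd n)]. Qed.

Definition Vc (c : 'I_K) : {set vert F} := [set u | color u == val c].

Lemma upper : packing_colorable F K.
Proof.
exists Vc; split.
- move=> x; exists (Ordinal (color_lt x)); split; first by rewrite inE.
  by move=> c'; rewrite inE => /eqP e; apply: val_inj; rewrite /= e.
- move=> c x y; rewrite !inE => /eqP hx /eqP hy hxy.
  case: x hx hxy => [[a|[s k]] px] hx hxy; case: y hy hxy => [[b|[t l]] py] hy hxy.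
  + have ex : exist _ (inl a) px = Ov m a by apply: val_inj.
    have ey : exist _ (inl b) py = Ov m b by apply: val_inj.
    rewrite ex ey in hxy *; rewrite eqOO in hxy.
    rewrite /color /= in hx hy.
    have [hc hna] := colO_far hn hm hxy (etrans hx (esym hy)).
    apply/negP => hd.
    have hd3 : dist_le 3 (Ov m a) (Ov m b) by apply: dl_mono hd; rewrite -hx ltnS.
    move: (walk3 hxy hd3) => /orP [] /sadj_idx h.
    * by rewrite h in hna.
    * by rewrite csym h in hna.
  + by move: hx hy; rewrite /color /= => <-; move: (colO_pos a); case: (colO a).
  + by move: hx hy; rewrite /color /= => <-; move: (colO_pos b); case: (colO b).
  + rewrite /color /= in hx; rewrite -hx; apply/negP => /dl1 [e|//].
    by rewrite e eqxx in hxy.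
Qed.
End Upper.

Theorem proposition8 (n m : nat) (hn : 3 <= n) (hm : 1 <= m) :
  packing_chromatic_number_is (FSSD m (splitting_graph (cycle_graph n)))
    (if odd n then 5 else 3).
Proof.
split; first exact: (upper hn hm).
move=> j [V [hV hP]].
case ho: (odd n).
- rewrite leqNgt; apply/negP => hj.
  by apply: (lower_odd hn hm (j:=j) _ hV hP); [lia|].
- rewrite leqNgt; apply/negP => hj.
  by apply: (lower_even hn hm (j:=j) _ hV hP); lia.
Qed.
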